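(* Let $\Bbbk$ be a commutative ring of global dimension zero, $C$ a $\Bbbk$-coalgebra with comultiplication $\Delta$, and $M$ a right $C$-comodule that is finitely generated as a $\Bbbk$-module, with coaction $\rho\colon M\to M\otimes C$. The $\Bbbk$-linear map $\mathrm{tr}^C\colon\mathrm{End}_C(M)\to C$, $\mathrm{tr}^C(f)=\mathrm{tr}(\rho\circ f)$, is a cotrace, i.e. $\Delta(\mathrm{tr}^C(f))=\tau(\Delta(\mathrm{tr}^C(f)))$ for all $f\in\mathrm{End}_C(M)$. In particular $\mathrm{tr}^C$ factors uniquely through the inclusion $\mathrm{coHH}_0(C)\hookrightarrow C$.
   Context: $\tau$ is the swap $C\otimes C\to C\otimes C$. $\mathrm{End}_C(M)$ is the $\Bbbk$-module of right $C$-colinear endomorphisms. $\mathrm{coHH}_0(C)=\ker(\Delta-\tau\circ\Delta)$. For a $\Bbbk$-linear $g\colon M\to M\otimes C$, its twisted trace is $\mathrm{tr}(g)=\sum_i (e_i^*\otimes\mathrm{id}_C)(g(e_i))\in C$ for a $\Bbbk$-basis $(e_i)$ of $M$ with dual basis $(e_i^* )$; thus $\mathrm{tr}^C(f)=\sum_i\sum e_i^*(f(e_{i(0)}))e_{i(1)}$ in Sweedler notation $\rho(m)=\sum m_{(0)}\otimes m_{(1)}$. *)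

(* Defs.v *)
From HB Require Import structures.
From mathcomp Require Import all_boot all_order all_algebra.
Set Implicit Arguments. Unset Strict Implicit. Unset Printing Implicit Defensive.
Import GRing.Theory.
Local Open Scope ring_scope.

Definition lin (R : comPzRingType) (A B : lmodType R) (f : A -> B) : Prop :=
  forall (a : R) (x y : A), f (a *: x + y) = a *: f x + f y.

Definition bilin (R : comPzRingType) (A B N : lmodType R) (b : A -> B -> N) : Prop :=
  (forall y, lin (fun x => b x y)) /\ (forall x, lin (b x)).

Definition trilin (R : comPzRingType) (A B D N : lmodType R)
  (t : A -> B -> D -> N) : Prop :=
  [/\ forall y z, lin (fun x => t x y z),
      forall x z, lin (fun y => t x y z) &
      forall x y, lin (t x y)].

(* Elements of A (x)_k B are represented by finite sums of pure tensors
   (a seq of pairs); two representatives are identified exactly when they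
   are identified in the tensor product, i.e. when every bilinear map
   (universal property) takes the same value on them. *)
Definition tensor_eq (R : comPzRingType) (A B : lmodType R)
  (s t : seq (A * B)) : Prop :=
  forall (N : lmodType R) (b : A -> B -> N), bilin b ->
    \sum_(p <- s) b p.1 p.2 = \sum_(p <- t) b p.1 p.2.

Definition tensor3_eq (R : comPzRingType) (A B D : lmodType R)
  (s t : seq (A * B * D)) : Prop :=
  forall (N : lmodType R) (b : A -> B -> D -> N), trilin b ->
    \sum_(p <- s) b p.1.1 p.1.2 p.2 = \sum_(p <- t) b p.1.1 p.1.2 p.2.

Definition tlin (R : comPzRingType) (X A B : lmodType R) (f : X -> seq (A * B)) : Prop :=
  forall (a : R) (x y : X),
    tensor_eq (f (a *: x + y)) ([seq (a *: p.1, p.2) | p <- f x] ++ f y).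

Definition tswap (A B : Type) (s : seq (A * B)) : seq (B * A) :=
  [seq (p.2, p.1) | p <- s].

Definition is_coalgebra (R : comPzRingType) (C : lmodType R)
  (Delta : C -> seq (C * C)) (eps : C -> R^o) : Prop :=
  [/\ tlin Delta, lin eps,
      (* coassociativity: (Delta (x) id) Delta = (id (x) Delta) Delta *)
      forall c, tensor3_eq
        (flatten [seq [seq (q.1, q.2, p.2) | q <- Delta p.1] | p <- Delta c])
        (flatten [seq [seq (p.1, q.1, q.2) | q <- Delta p.2] | p <- Delta c]),
      forall c, \sum_(p <- Delta c) (eps p.1 : R) *: p.2 = c &
      forall c, \sum_(p <- Delta c) (eps p.2 : R) *: p.1 = c].

Definition is_right_comodule (R : comPzRingType) (C M : lmodType R)
  (Delta : C -> seq (C * C)) (eps : C -> R^o) (rho : M -> seq (M * C)) : Prop :=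
  [/\ tlin rho,
      (* (rho (x) id) rho = (id (x) Delta) rho *)
      forall m, tensor3_eq
        (flatten [seq [seq (q.1, q.2, p.2) | q <- rho p.1] | p <- rho m])
        (flatten [seq [seq (p.1, q.1, q.2) | q <- Delta p.2] | p <- rho m]) &
      forall m, \sum_(p <- rho m) (eps p.2 : R) *: p.1 = m].

Definition colinear (R : comPzRingType) (C M : lmodType R)
  (rho : M -> seq (M * C)) (f : M -> M) : Prop :=
  lin f /\ forall m, tensor_eq (rho (f m)) [seq (f p.1, p.2) | p <- rho m].

Definition projective (R : comPzRingType) (M : lmodType R) : Prop :=
  forall (A B : lmodType R) (p : A -> B), lin p -> (forall b, exists a, p a = b) ->
  forall g : M -> B, lin g -> exists h : M -> A, lin h /\ forall m, p (h m) = g m.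

Definition global_dim_zero (R : comPzRingType) : Prop :=
  forall M : lmodType R, projective M.

Definition fin_gen (R : comPzRingType) (M : lmodType R) : Prop :=
  exists s : seq M, forall m : M,
    exists c : nat -> R, m = \sum_(i < size s) c i *: s`_i.

Definition dual_basis (R : comPzRingType) (M : lmodType R) (n : nat)
  (e : 'I_n -> M) (es : 'I_n -> M -> R^o) : Prop :=
  (forall i, lin (es i)) /\ forall m, m = \sum_(i < n) (es i m : R) *: e i.

Definition twtrace (R : comPzRingType) (C M : lmodType R) (n : nat)
  (e : 'I_n -> M) (es : 'I_n -> M -> R^o) (g : M -> seq (M * C)) : C :=
  \sum_(i < n) \sum_(p <- g (e i)) (es i p.1 : R) *: p.2.

Definition trC (R : comPzRingType) (C M : lmodType R) (n : nat)
  (e : 'I_n -> M) (es : 'I_n -> M -> R^o) (rho : M -> seq (M * C)) (f : M -> M) : C :=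
  twtrace e es (fun m => rho (f m)).

Definition coHH0 (R : comPzRingType) (C : lmodType R) (Delta : C -> seq (C * C))
  (c : C) : Prop := tensor_eq (Delta c) (tswap (Delta c)).

(* Main.v *)
Require Import Defs.
From mathcomp Require Import all_boot all_order all_algebra.
Set Implicit Arguments. Unset Strict Implicit. Unset Printing Implicit Defensive.
Import GRing.Theory.
Local Open Scope ring_scope.

Section Gen.
Variable R : comPzRingType.

Lemma lin0 (A B : lmodType R) (f : A -> B) : lin f -> f 0 = 0.
Proof.
move=> hf; have H := hf 1 0 0; rewrite !scale1r addr0 in H.
have : f 0 - f 0 = f 0 + f 0 - f 0 by rewrite -H.
by rewrite subrr addrK.
Qed.

Lemma linD (A B : lmodType R) (f : A -> B) : lin f -> forall x y, f (x + y) = f x + f y.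
Proof. by move=> hf x y; rewrite -[x in LHS]scale1r hf scale1r. Qed.

Lemma linZ (A B : lmodType R) (f : A -> B) : lin f -> forall a x, f (a *: x) = a *: f x.
Proof. by move=> hf a x; rewrite -[_ *: x]addr0 hf (lin0 hf) addr0. Qed.

Lemma lin_sum (A B : lmodType R) (f : A -> B) : lin f ->
  forall (I : Type) (r : seq I) (P : pred I) (F : I -> A),
  f (\sum_(i <- r | P i) F i) = \sum_(i <- r | P i) f (F i).
Proof. move=> hf I r P F; apply: (big_morph f (linD hf) (lin0 hf)). Qed.

Lemma lin_comp (A B D : lmodType R) (f : A -> B) (g : B -> D) :
  lin f -> lin g -> lin (fun x => g (f x)).
Proof. by move=> hf hg a x y; rewrite hf hg. Qed.

Lemma bilin_flip (A B N : lmodType R) (b : A -> B -> N) :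
  bilin b -> bilin (fun x y => b y x).
Proof. by case=> h1 h2; split. Qed.

Lemma bl_sum1 (A B N : lmodType R) (b : A -> B -> N) : bilin b ->
  forall (I : Type) (r : seq I) (F : I -> A) y,
  b (\sum_(i <- r) F i) y = \sum_(i <- r) b (F i) y.
Proof. by move=> hb I r F y; rewrite (lin_sum (hb.1 y)). Qed.
Lemma bl_sum2 (A B N : lmodType R) (b : A -> B -> N) : bilin b ->
  forall (I : Type) (r : seq I) (F : I -> B) x,
  b x (\sum_(i <- r) F i) = \sum_(i <- r) b x (F i).
Proof. by move=> hb I r F x; rewrite (lin_sum (hb.2 x)). Qed.
Lemma bl_Z1 (A B N : lmodType R) (b : A -> B -> N) : bilin b ->
  forall a x y, b (a *: x) y = a *: b x y.
Proof. by move=> hb a x y; rewrite (linZ (hb.1 y)). Qed.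
Lemma bl_Z2 (A B N : lmodType R) (b : A -> B -> N) : bilin b ->
  forall a x y, b x (a *: y) = a *: b x y.
Proof. by move=> hb a x y; rewrite (linZ (hb.2 x)). Qed.

End Gen.

Theorem proposition2p20 (R : comPzRingType) (C M : lmodType R)
  (Delta : C -> seq (C * C)) (eps : C -> R^o) (rho : M -> seq (M * C))
  (n : nat) (e : 'I_n -> M) (es : 'I_n -> M -> R^o) :
  global_dim_zero R ->
  is_coalgebra Delta eps ->
  is_right_comodule Delta eps rho ->
  fin_gen M ->
  dual_basis e es ->
  (forall f : M -> M, colinear rho f ->
     tensor_eq (Delta (trC e es rho f)) (tswap (Delta (trC e es rho f))))
  /\ (forall f : M -> M, colinear rho f -> coHH0 Delta (trC e es rho f)).
Proof.
move=> _ [tlinD _ _ _ _] [tlinr coass _] _ [eslin dbexp].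
pose cc k m := \sum_(p <- rho m) (es k p.1 : R) *: p.2.
have bcc : forall k, bilin (fun (x : M) (y : C) => (es k x : R) *: y).
  move=> k; split=> [y a x x'|x a y y'].
    by rewrite (eslin k) scalerDl scalerA.
  by rewrite scalerDr !scalerA mulrC.
have cc_lin : forall k, lin (cc k).
  move=> k a x y; rewrite /cc (tlinr a x y _ _ (bcc k)) big_cat big_map /=.
  rewrite scaler_sumr; congr (_ + _); apply: eq_bigr => p _.
  by rewrite (linZ (eslin k)) scalerA.
have expand : forall (V : lmodType R) (g : M -> V), lin g ->
    forall x, g x = \sum_l (es l x : R) *: g (e l).
  move=> V g hg x; rewrite {1}(dbexp x) (lin_sum hg); apply: eq_bigr => l _.
  by rewrite (linZ hg).
have Blin : forall (N : lmodType R) (b : C -> C -> N), bilin b ->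
    lin (fun c => \sum_(p <- Delta c) b p.1 p.2).
  move=> N b hb a x y /=; rewrite (tlinD a x y _ _ hb) big_cat big_map /=.
  rewrite scaler_sumr; congr (_ + _); apply: eq_bigr => p _.
  by rewrite (linZ (hb.1 _)).
have F2 : forall (N : lmodType R) (b : C -> C -> N), bilin b -> forall k m,
    \sum_(p <- Delta (cc k m)) b p.1 p.2 = \sum_l b (cc k (e l)) (cc l m).
  move=> N b hb k m.
  pose T (x : M) (y z : C) := (es k x : R) *: b y z.
  have hT : trilin T.
    split=> [y z a x x'|x z a y y'|x y a z z']; rewrite /T.
    - by rewrite (eslin k) scalerDl scalerA.
    - by rewrite (hb.1 z) scalerDr !scalerA mulrC.
    - by rewrite (hb.2 y) scalerDr !scalerA mulrC.
  have := coass m N T hT.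
  rewrite !big_flatten /= !big_map.
  under eq_bigr do rewrite big_map.
  under [X in _ = X -> _]eq_bigr do rewrite big_map.
  rewrite /= => H.
  transitivity (\sum_(p <- rho m) \sum_(q <- Delta p.2) T p.1 q.1 q.2).
    rewrite /cc (lin_sum (Blin _ _ hb)); apply eq_bigr; move=> p _ /=.
    have := linZ (Blin _ _ hb) (es k p.1) p.2 => /= ->.
    by rewrite scaler_sumr.
  rewrite -H.
  transitivity (\sum_(p <- rho m) b (cc k p.1) p.2).
    apply: eq_bigr => p _; rewrite /cc (bl_sum1 hb); apply: eq_bigr => q _.
    by rewrite (bl_Z1 hb).
  transitivity (\sum_(p <- rho m) \sum_l b ((es l p.1 : R) *: cc k (e l)) p.2).
    by apply: eq_bigr => p _; rewrite {1}(expand _ _ (cc_lin k) p.1) (bl_sum1 hb).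
  rewrite exchange_big /=; apply: eq_bigr => l _.
  rewrite /cc (bl_sum2 hb); apply: eq_bigr => p _.
  by rewrite (bl_Z1 hb) (bl_Z2 hb).
have key : forall f : M -> M, colinear rho f ->
    tensor_eq (Delta (trC e es rho f)) (tswap (Delta (trC e es rho f))).
  move=> f [flin fcol] N b hb.
  have G : forall k m, cc k (f m) = \sum_l (es k (f (e l)) : R) *: cc l m.
    move=> k m; rewrite /cc (fcol m _ _ (bcc k)) big_map /=.
    transitivity (\sum_(p <- rho m) \sum_l
        (es l p.1 : R) *: ((es k (f (e l)) : R) *: p.2)).
      apply eq_bigr; move=> p _.
      have E : (es k (f p.1) : R) = \sum_l (es l p.1 : R) * (es k (f (e l)) : R).
        exact: (expand _ _ (lin_comp flin (eslin k)) p.1).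
      rewrite E scaler_suml; apply eq_bigr; move=> l _; by rewrite scalerA.
    rewrite exchange_big; apply eq_bigr; move=> l _ /=.
    rewrite scaler_sumr; apply eq_bigr; move=> p _; by rewrite !scalerA mulrC.
  have H : forall k m, cc k (f m) = \sum_l (es l (f m) : R) *: cc k (e l).
    by move=> k m; exact: (expand _ _ (cc_lin k) (f m)).
  rewrite /tswap big_map /=.
  change (trC e es rho f) with (\sum_i cc i (f (e i))).
  transitivity (\sum_i \sum_l \sum_j
      (es l (f (e j)) : R) *: b (cc i (e l)) (cc j (e i))).
    have := lin_sum (Blin _ _ hb) (index_enum 'I_n) xpredT (fun i => cc i (f (e i))).
    move=> /= ->; apply eq_bigr; move=> i _.
    rewrite F2 //; apply eq_bigr; move=> l _.
    rewrite G (bl_sum2 hb); apply eq_bigr; move=> j _; by rewrite (bl_Z2 hb).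
  symmetry.
  transitivity (\sum_i \sum_l \sum_j
      (es j (f (e i)) : R) *: b (cc l (e j)) (cc i (e l))).
    have := lin_sum (Blin _ _ (bilin_flip hb)) (index_enum 'I_n) xpredT (fun i => cc i (f (e i))).
    move=> /= ->; apply eq_bigr; move=> i _.
    have := F2 _ _ (bilin_flip hb) i (f (e i)); move=> /= ->.
    apply eq_bigr; move=> l _.
    rewrite H (bl_sum1 hb); apply eq_bigr; move=> j _; by rewrite (bl_Z1 hb).
  symmetry.
  under eq_bigr do rewrite exchange_big.
  by rewrite exchange_big.
split; first exact: key.
exact: key.
Qed.
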